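(* For nonnegative integers $n_1,n_2,a,b$ and $n=n_1+n_2$, \begin{multline*} \sum_{i,j\ge0} q^{(n_1-a)i+(n_2-b)j-ij+i^2+j^2} \begin{bmatrix} n_1\\ a-i\end{bmatrix}_q\begin{bmatrix} n_2\\ b-j\end{bmatrix}_q \begin{bmatrix} n_1+n_2\\ n_1+i-j\end{bmatrix}_q \begin{bmatrix} n_1+i\\ n_1\end{bmatrix}_q \begin{bmatrix} n_2+j\\ n_2\end{bmatrix}_q\\ = \begin{bmatrix} n\\ n_1\end{bmatrix}_q\sum_{i\ge0} q^{(n-a-b)i + i^2} \begin{bmatrix} n+i\\ i\end{bmatrix}_q \begin{bmatrix} n\\ a-i\end{bmatrix}_q \begin{bmatrix} n\\ b-i\end{bmatrix}_q. \end{multline*}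
   Context: $[m]_q=1+\dots+q^{m-1}$, $[m]_q!=[1]_q\cdots[m]_q$, and $\begin{bmatrix} m\\ j\end{bmatrix}_q=\frac{[m]_q!}{[j]_q![m-j]_q!}$ for $0\le j\le m$, and $0$ otherwise. Sums are over integers. *)

(* Defs.v *)
From HB Require Import structures.
From mathcomp Require Import all_boot all_order all_algebra.
Set Implicit Arguments. Unset Strict Implicit. Unset Printing Implicit Defensive.
Import Order.TTheory GRing.Theory Num.Theory.
Local Open Scope ring_scope.

Definition qint (F : fieldType) (q : F) (m : nat) : F := \sum_(k < m) q ^+ k.
Definition qfact (F : fieldType) (q : F) (m : nat) : F := \prod_(k < m) qint q k.+1.
Definition qbinom (F : fieldType) (q : F) (m j : int) : F :=
  if (0 <= j) && (j <= m) then
    qfact q `|m|%N / (qfact q `|j|%N * qfact q `|m - j|%N)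
  else 0.

Definition RatFun := {fraction {poly rat}}.
Definition qX : RatFun := FracField.tofrac ('X : {poly rat}).

(* Main.v *)
Set Warnings "-notation-overridden,-ambiguous-paths,-overwriting-delimiting-key".
Require Import Defs.
From HB Require Import structures.
From mathcomp Require Import all_boot all_order all_algebra.
From mathcomp Require Import zify ring lra.
Import Order.TTheory GRing.Theory Num.Theory.
Local Open Scope ring_scope.

Fixpoint G (m r : nat) : RatFun :=
  match m, r with
  | _, 0%N => 1
  | 0%N, _.+1 => 0
  | m'.+1, r'.+1 => G m' r' + qX ^+ r'.+1 * G m' r'.+1
  end.

Arguments G : simpl never.

Definition Gz (m : nat) (z : int) : RatFun :=
  match z with Posz r => G m r | Negz _ => 0 end.

Lemma qX_neq0 : qX != 0.
Proof. by rewrite /qX tofrac_eq0 polyX_eq0. Qed.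

Lemma G0r m : G m 0 = 1. Proof. by case: m. Qed.

Lemma GS m r : G m.+1 r.+1 = G m r + qX ^+ r.+1 * G m r.+1.
Proof. by []. Qed.

Lemma G_big m r : (m < r)%N -> G m r = 0.
Proof.
elim: m r => [|m IH] [|r] //= H.
by rewrite GS !IH ?mulr0 ?addr0 //; lia.
Qed.

Lemma Gz_neg m z : z < 0 -> Gz m z = 0.
Proof. by case: z. Qed.

Lemma Gz_pascal m z : Gz m.+1 z = Gz m (z - 1) + qX ^ z * Gz m z.
Proof.
case: z => [[|r]|r] /=.
- by rewrite !G0r mulr1 add0r expr0z.
- by rewrite subSS subn0.
- by rewrite mulr0 addr0.
Qed.

Lemma Gz0 z : Gz 0 z = (z == 0)%:R.
Proof. by case: z => [[|r]|r]. Qed.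

Lemma qint_neq0 k : (0 < k)%N -> qint qX k != 0.
Proof.
move=> k0.
have -> : qint qX k = FracField.tofrac (\sum_(i < k) ('X : {poly rat}) ^+ i).
  by rewrite rmorph_sum; apply: eq_bigr => i _; rewrite rmorphXn.
rewrite tofrac_eq0; apply/eqP => H.
have := congr1 (fun p : {poly rat} => p.[1]) H.
rewrite horner_sum hornerC.
under eq_bigr => i _ do rewrite hornerXn expr1n.
rewrite sumr_const card_ord => /eqP.
by rewrite pnatr_eq0 => /eqP Hk; move: k0; rewrite Hk.
Qed.

Lemma qfact_neq0 m : qfact qX m != 0.
Proof.
rewrite /qfact; apply/prodf_neq0 => i _; exact: qint_neq0.
Qed.

Lemma qfactS m : qfact qX m.+1 = qfact qX m * qint qX m.+1.
Proof. by rewrite /qfact big_ord_recr. Qed.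

Lemma qintD a b : qint qX (a + b) = qint qX a + qX ^+ a * qint qX b.
Proof.
rewrite /qint big_split_ord /=; congr (_ + _).
rewrite mulr_sumr; apply: eq_bigr => i _; by rewrite exprD.
Qed.

Lemma G_fact m r : (r <= m)%N ->
  G m r * (qfact qX r * qfact qX (m - r)) = qfact qX m.
Proof.
elim: m r => [|m IH] [|r] //= Hr.
- by rewrite subnn /qfact !big_ord0 !mul1r.
- by rewrite /qfact big_ord0 !mul1r subn0.
have H1 : G m r * (qfact qX r.+1 * qfact qX (m.+1 - r.+1)) = qfact qX m * qint qX r.+1.
  by rewrite subSS qfactS -(IH r) //; ring.
have H2 : G m r.+1 * (qfact qX r.+1 * qfact qX (m.+1 - r.+1)) = qfact qX m * qint qX (m - r).
  case: (ltnP r m) => Hrm.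
  + rewrite subSS -(IH r.+1 Hrm).
    have -> : (m - r = (m - r.+1).+1)%N by lia.
    by rewrite (qfactS (m - r.+1)); ring.
  + have -> : (m - r = 0)%N by lia.
    by rewrite G_big ?mul0r /qint ?big_ord0 ?mulr0 //; lia.
rewrite mulrDl H1 -mulrA H2 qfactS.
have -> : m.+1 = (r.+1 + (m - r))%N by lia.
by rewrite qintD; ring.
Qed.

Lemma G_formula m r : (r <= m)%N ->
  G m r = qfact qX m / (qfact qX r * qfact qX (m - r)).
Proof.
move=> H; rewrite -(@G_fact m r H) mulfK //.
by rewrite mulf_neq0 // qfact_neq0.
Qed.

Lemma qbinomE (m : nat) (z : int) : qbinom qX m z = Gz m z.
Proof.
rewrite /qbinom; case: z => [r|r] /=.
- case: (leqP r m) => H.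
  + rewrite lez_nat H /= G_formula //.
    by have -> : `|(m%:Z - r%:Z)|%N = (m - r)%N by lia.
  + by rewrite lez_nat leqNgt H /= G_big.
- by [].
Qed.

Lemma qXD (x y : int) : qX ^ (x + y) = qX ^ x * qX ^ y.
Proof. exact: expfzDr qX_neq0. Qed.

Lemma qX_comb (x y u v : int) : x + y = u + v -> qX ^ x * qX ^ y = qX ^ u * qX ^ v.
Proof. by rewrite -!qXD => ->. Qed.

Lemma sum_single (K a : nat) (F : nat -> RatFun) : (a < K)%N ->
  (forall i, (i < K)%N -> i != a -> F i = 0) ->
  \sum_(i < K) F i = F a.
Proof.
move=> aK H; rewrite (bigD1 (Ordinal aK)) //= big1 ?addr0 //.
move=> i Hi; apply: H; first exact: ltn_ord.
by apply: contra Hi => /eqP Hia; apply/eqP/val_inj.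
Qed.

Lemma sum_zero (K : nat) (F : nat -> RatFun) :
  (forall i, (i < K)%N -> F i = 0) -> \sum_(i < K) F i = 0.
Proof. by move=> H; rewrite big1 // => i _; apply: H. Qed.

Lemma vander m p (a : int) (k K : nat) : a < K%:Z ->
  \sum_(i < K) qX ^ ((m%:Z - (a - i%:Z)) * (i%:Z - k%:Z)) * Gz m (a - i%:Z) * Gz p (i%:Z - k%:Z)
  = Gz (m + p) (a - k%:Z).
Proof.
elim: m a => [|m IH] a HaK.
- case: a HaK => [a'|a'] HaK.
  + rewrite (@sum_single K a' (fun i : nat => qX ^ ((0%:Z - (a'%:Z - i%:Z)) * (i%:Z - k%:Z)) * Gz 0 (a'%:Z - i%:Z) * Gz p (i%:Z - k%:Z))).
    * by rewrite subrr subr0 mul0r expr0z mul1r /= mul1r.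
    * by move: HaK; rewrite ltz_nat.
    * move=> i _ Hi; rewrite Gz0.
      have -> : (a'%:Z - i%:Z == 0) = false by apply/negbTE; move: Hi; lia.
      by rewrite mulr0 mul0r.
  + rewrite big1; first by rewrite Gz_neg //; lia.
    by move=> i _; rewrite Gz_neg ?mulr0 ?mul0r //; lia.
- rewrite addSn Gz_pascal.
  have -> : a - k%:Z - 1 = (a - 1) - k%:Z by ring.
  rewrite -IH; last by lia.
  rewrite -(IH a) // mulr_sumr -big_split /=.
  apply: eq_bigr => i _.
  rewrite Gz_pascal.
  have -> : a - i%:Z - 1 = (a - 1) - i%:Z by ring.
  have -> : (m.+1%:Z - (a - i%:Z)) * (i%:Z - k%:Z) =
            (m%:Z - ((a - 1) - i%:Z)) * (i%:Z - k%:Z) by rewrite -addn1 PoszD; ring.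
  rewrite mulrDr mulrDl; congr (_ + _).
  rewrite mulrA (@qX_comb _ _ (a - k%:Z) ((m%:Z - (a - i%:Z)) * (i%:Z - k%:Z))); first by ring.
  by ring.
Qed.

Definition R (K n1 n2 i : nat) (j : int) : RatFun :=
  \sum_(k < K) qX ^ ((i%:Z - k%:Z) * (j - k%:Z)) * G (n1 + n2 + k) k
     * Gz n2 (i%:Z - k%:Z) * Gz n1 (j - k%:Z).

Lemma telesc (K : nat) (A B u : nat -> RatFun) : B 0%N = 0 -> u K = 0 ->
  (forall k, B k.+1 = A k) ->
  \sum_(k < K) A k * (u k - u k.+1) = \sum_(k < K) (A k - B k) * u k.
Proof.
move=> B0 uK AB.
have H : \sum_(k < K) A k * u k.+1 = \sum_(k < K) B k * u k.
  have E : \sum_(k < K.+1) B k * u k = \sum_(k < K) A k * u k.+1.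
    rewrite big_ord_recl B0 mul0r add0r; apply: eq_bigr => k _.
    by rewrite lift0 AB.
  by rewrite -E big_ord_recr /= uK mulr0 addr0.
rewrite (eq_bigr (fun k : 'I_K => A k * u k - A k * u k.+1)); last first.
  by move=> k _; rewrite mulrBr.
rewrite sumrB H -sumrB; apply: eq_bigr => k _; by rewrite mulrBl.
Qed.

Lemma R_rec K n1 n2 i (j : int) : (i < K)%N ->
  R K n1.+1 n2 i j = R K n1 n2.+1 i (j - 1) + qX ^ j * R K n1 n2 i j.
Proof.
move=> iK.
pose A := fun k : nat => G (n1 + n2 + k).+1 k.
pose B := fun k : nat => Gz (n1 + n2 + k) (k%:Z - 1).
pose u := fun k : nat => qX ^ ((i%:Z - k%:Z) * (j - k%:Z) + (j - k%:Z))
                          * Gz n2 (i%:Z - k%:Z) * Gz n1 (j - k%:Z).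
have S1 : R K n1.+1 n2 i j = R K n1 n2.+1 i (j - 1) + \sum_(k < K) A k * (u k - u k.+1).
  rewrite /R -big_split; apply: eq_bigr => k _; rewrite /=.
  rewrite /A /u.
  have -> : (n1.+1 + n2 + k = (n1 + n2 + k).+1)%N by lia.
  have -> : (n1 + n2.+1 + k = (n1 + n2 + k).+1)%N by lia.
  rewrite !Gz_pascal.
  have -> : i%:Z - k.+1%:Z = i%:Z - k%:Z - 1 by lia.
  have -> : j - k.+1%:Z = j - 1 - k%:Z by lia.
  have -> : j - k%:Z - 1 = j - 1 - k%:Z by lia.
  set t := i%:Z - k%:Z.
  have -> : t * (j - k%:Z) + (j - k%:Z) = t * (j - 1 - k%:Z) + t + (j - k%:Z) by rewrite /t; ring.
  have -> : t * (j - k%:Z) = t * (j - 1 - k%:Z) + t by rewrite /t; ring.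
  have -> : (t - 1) * (j - 1 - k%:Z) + (j - 1 - k%:Z) = t * (j - 1 - k%:Z) by ring.
  rewrite !qXD; ring.
rewrite S1 (@telesc K A B u).
- congr (_ + _); rewrite /R mulr_sumr; apply: eq_bigr => k _.
  rewrite /A /B /u.
  have -> : G (n1 + n2 + k).+1 k = Gz (n1 + n2 + k).+1 k by [].
  rewrite Gz_pascal addrAC subrr add0r.
  have Hk : qX ^ (k%:Z) * qX ^ (j - k%:Z) = qX ^ j by rewrite -qXD; congr (_ ^ _); ring.
  rewrite (qXD ((i%:Z - k%:Z) * (j - k%:Z)) (j - k%:Z)) -Hk /=; ring.
- by rewrite /B Gz_neg.
- by rewrite /u Gz_neg ?mulr0 ?mul0r //; lia.
- move=> k; rewrite /B /A.
  have -> : k.+1%:Z - 1 = k%:Z by lia.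
  by rewrite addnS.
Qed.

Lemma fid1 (F : fieldType) (a b c d e f : F) : a != 0 -> b != 0 -> c != 0 -> e != 0 -> f != 0 ->
  a / (b * c) * (d / (a * f)) = d / (b * e) * (e / (c * f)).
Proof. move=> *; field. by apply/and5P. Qed.

Lemma base_id i j n2 : G i j * G (n2 + j) i = G (n2 + j) j * Gz n2 (i%:Z - j%:Z).
Proof.
case: (leqP j i) => Hji.
- have -> : i%:Z - j%:Z = (i - j)%N by lia.
  rewrite /=.
  case: (leqP i (n2 + j)) => Hi.
  + have h3 : (j <= n2 + j)%N by lia.
    have h4 : (i - j <= n2)%N by lia.
    rewrite (@G_formula _ _ Hji) (@G_formula _ _ Hi) (@G_formula _ _ h3) (@G_formula _ _ h4).
    have -> : (n2 + j - j = n2)%N by lia.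
    have -> : (n2 - (i - j) = n2 + j - i)%N by lia.
    by apply: fid1; rewrite qfact_neq0.
  + rewrite (@G_big _ _ Hi) (@G_big n2); first by rewrite !mulr0.
    lia.
- by rewrite G_big // Gz_neg ?mul0r ?mulr0 //; lia.
Qed.

Lemma saal n1 n2 i j K : (i < K)%N -> G (n1 + i) j * G (n2 + j) i = R K n1 n2 i j.
Proof.
move=> iK.
elim: n1 n2 j => [|n1 IH] n2 j.
- rewrite /R add0n.
  case: (ltnP j K) => HjK.
  + rewrite (bigD1 (Ordinal HjK)) //= big1 ?addr0.
    * rewrite subrr mulr0 expr0z mul1r Gz0 eqxx mulr1 add0n.
      exact: base_id.
    * move=> k Hk; rewrite Gz0.
      have -> : (j%:Z - k%:Z == 0) = false.
        apply/negbTE; apply: contra Hk => /eqP Hjk.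
        apply/eqP/val_inj => /=; lia.
      by rewrite mulr0.
  + rewrite G_big; last by lia.
    rewrite mul0r big1 // => k _; rewrite Gz0.
    have -> : (j%:Z - k%:Z == 0) = false by apply/negbTE; have := ltn_ord k; lia.
    by rewrite mulr0.
- case: j => [|j].
  + rewrite G0r mul1r addn0 /R.
    have K0 : (0 < K)%N by lia.
    rewrite (bigD1 (Ordinal K0)) //= big1 ?addr0.
    * by rewrite mulr0 expr0z !addn0 !G0r !mul1r mulr1.
    * move=> k Hk.
      have Hk0 : k != 0%N :> nat by apply: contra Hk => /eqP Hk0; apply/eqP/val_inj.
      rewrite (@Gz_neg n1.+1 (0%:Z - k%:Z)) ?mulr0 //; lia.
  + have -> : (n1.+1 + i = (n1 + i).+1)%N by lia.
    rewrite GS mulrDl -mulrA.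
    have -> : (n2 + j.+1 = n2.+1 + j)%N by lia.
    rewrite IH.
    have -> : (n2.+1 + j = n2 + j.+1)%N by lia.
    rewrite IH R_rec //.
    have -> : j.+1%:Z - 1 = j%:Z by lia.
    by [].
Qed.

Lemma fid2 (F : fieldType) (N P E A M I B M2 J : F) :
  P != 0 -> E != 0 -> M != 0 -> I != 0 -> M2 != 0 -> J != 0 ->
  N / (P * E) * (A / (M * I)) * (B / (M2 * J)) =
  N / (M * M2) * (A / (J * P)) * (B / (I * E)).
Proof. move=> *; field; by do ! (apply/andP; split). Qed.

Lemma step1 n1 n2 i j :
  Gz (n1 + n2) (n1%:Z + i%:Z - j%:Z) * G (n1 + i) n1 * G (n2 + j) n2
  = G (n1 + n2) n1 * G (n1 + i) j * G (n2 + j) i.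
Proof.
have q0 := qfact_neq0.
case: (leqP j i) => Hji.
- have -> : n1%:Z + i%:Z - j%:Z = (n1 + (i - j))%N by lia.
  rewrite /=.
  case: (leqP (i - j) n2) => Hd.
  + have h1 : (n1 + (i - j) <= n1 + n2)%N by lia.
    have h2 : (n1 <= n1 + i)%N by lia.
    have h3 : (n2 <= n2 + j)%N by lia.
    have h4 : (n1 <= n1 + n2)%N by lia.
    have h5 : (j <= n1 + i)%N by lia.
    have h6 : (i <= n2 + j)%N by lia.
    rewrite (@G_formula _ _ h1) (@G_formula _ _ h2) (@G_formula _ _ h3)
            (@G_formula _ _ h4) (@G_formula _ _ h5) (@G_formula _ _ h6).
    have -> : (n1 + n2 - (n1 + (i - j)) = n2 + j - i)%N by lia.
    have -> : (n1 + i - n1 = i)%N by lia.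
    have -> : (n2 + j - n2 = j)%N by lia.
    have -> : (n1 + n2 - n1 = n2)%N by lia.
    have -> : (n1 + i - j = n1 + (i - j))%N by lia.
    by apply: fid2.
  + rewrite (@G_big (n1 + n2)); last by lia.
    rewrite (@G_big (n2 + j) i); last by lia.
    by rewrite !mulr0 !mul0r.
- case: (leqP (j - i) n1) => He.
  + have -> : n1%:Z + i%:Z - j%:Z = (n1 - (j - i))%N by lia.
    rewrite /=.
    have h1 : (n1 - (j - i) <= n1 + n2)%N by lia.
    have h2 : (n1 <= n1 + i)%N by lia.
    have h3 : (n2 <= n2 + j)%N by lia.
    have h4 : (n1 <= n1 + n2)%N by lia.
    have h5 : (j <= n1 + i)%N by lia.
    have h6 : (i <= n2 + j)%N by lia.
    rewrite (@G_formula _ _ h1) (@G_formula _ _ h2) (@G_formula _ _ h3)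
            (@G_formula _ _ h4) (@G_formula _ _ h5) (@G_formula _ _ h6).
    have -> : (n1 + n2 - (n1 - (j - i)) = n2 + j - i)%N by lia.
    have -> : (n1 + i - n1 = i)%N by lia.
    have -> : (n2 + j - n2 = j)%N by lia.
    have -> : (n1 + n2 - n1 = n2)%N by lia.
    have -> : (n1 + i - j = n1 - (j - i))%N by lia.
    by apply: fid2.
  + rewrite Gz_neg; last by lia.
    rewrite (@G_big (n1 + i) j); last by lia.
    by rewrite !mulr0 !mul0r.
Qed.

Lemma sum_extend (m K : nat) (F : nat -> RatFun) : (m <= K)%N ->
  (forall k, (m <= k)%N -> (k < K)%N -> F k = 0) ->
  \sum_(k < m) F k = \sum_(k < K) F k.
Proof.
move=> mK H; rewrite (big_ord_widen K F mK) big_mkcond /=.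
apply: eq_bigr => k _; case: ifP => // /negbT; rewrite -leqNgt => Hk.
by rewrite H.
Qed.

Lemma expo (n1 n2 a b i j k : nat) :
  (n1%:Z - a%:Z) * i%:Z + (n2%:Z - b%:Z) * j%:Z - i%:Z * j%:Z + i%:Z ^+ 2 + j%:Z ^+ 2
  + (i%:Z - k%:Z) * (j%:Z - k%:Z)
  = ((n1 + n2)%N%:Z - a%:Z - b%:Z) * k%:Z + k%:Z ^+ 2
    + (n1%:Z - (a%:Z - i%:Z)) * (i%:Z - k%:Z) + (n2%:Z - (b%:Z - j%:Z)) * (j%:Z - k%:Z).
Proof. rewrite PoszD; ring. Qed.

Lemma rearr (x y z w u A B C D H1 H2 : RatFun) : x * y = z * w * u ->
  x * (A * (B * (C * (y * D * H1 * H2)))) = C * z * D * (w * A * H1) * (u * B * H2).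
Proof. move=> H; transitivity ((x * y) * (A * B * C * D * H1 * H2)); first by ring.
by rewrite H; ring. Qed.

Theorem proposition5p1 (n1 n2 a b : nat) :
  let n := (n1 + n2)%N in
  \sum_(i < a.+1) \sum_(j < b.+1)
     qX ^ ((n1%:Z - a%:Z) * i%:Z + (n2%:Z - b%:Z) * j%:Z - i%:Z * j%:Z
            + i%:Z ^+ 2 + j%:Z ^+ 2)
     * qbinom qX n1 (a%:Z - i%:Z) * qbinom qX n2 (b%:Z - j%:Z)
     * qbinom qX (n1 + n2)%N (n1%:Z + i%:Z - j%:Z)
     * qbinom qX (n1 + i)%N n1 * qbinom qX (n2 + j)%N n2
  = qbinom qX n n1 *
    \sum_(i < (minn a b).+1)
     qX ^ ((n%:Z - a%:Z - b%:Z) * i%:Z + i%:Z ^+ 2)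
     * qbinom qX (n + i)%N i * qbinom qX n (a%:Z - i%:Z)
     * qbinom qX n (b%:Z - i%:Z).
Proof.
move=> n; rewrite /n {n}.
rewrite !qbinomE.
pose X (i k : nat) : RatFun :=
  qX ^ ((n1%:Z - (a%:Z - i%:Z)) * (i%:Z - k%:Z)) * Gz n1 (a%:Z - i%:Z) * Gz n2 (i%:Z - k%:Z).
pose Y (j k : nat) : RatFun :=
  qX ^ ((n2%:Z - (b%:Z - j%:Z)) * (j%:Z - k%:Z)) * Gz n2 (b%:Z - j%:Z) * Gz n1 (j%:Z - k%:Z).
pose c (k : nat) : RatFun :=
  G (n1 + n2) n1 * qX ^ (((n1 + n2)%N%:Z - a%:Z - b%:Z) * k%:Z + k%:Z ^+ 2)
  * G (n1 + n2 + k) k.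
transitivity (\sum_(i < a.+1) \sum_(j < b.+1) \sum_(k < a.+1) c k * X i k * Y j k).
  apply: eq_bigr => i _; apply: eq_bigr => j _.
  rewrite !qbinomE.
  have -> : Gz (n1 + i) n1 = G (n1 + i) n1 by [].
  have -> : Gz (n2 + j) n2 = G (n2 + j) n2 by [].
  rewrite -!mulrA (mulrA (Gz (n1 + n2) _)) step1 -(mulrA (G (n1 + n2) n1)).
  rewrite (@saal n1 n2 i j a.+1 (ltn_ord i)) /R !mulr_sumr; apply: eq_bigr => k _.
  rewrite /c /X /Y; apply: rearr.
  by rewrite -!qXD expo.
rewrite (eq_bigr (fun i : 'I_a.+1 => \sum_(k < a.+1) \sum_(j < b.+1) c k * X i k * Y j k)); last first.
  by move=> i _; rewrite exchange_big.
rewrite exchange_big /=.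
transitivity (\sum_(k < a.+1) c k * Gz (n1 + n2) (a%:Z - k%:Z) * Gz (n1 + n2) (b%:Z - k%:Z)).
  apply: eq_bigr => k _.
  have Hx : \sum_(i < a.+1) X i k = Gz (n1 + n2) (a%:Z - k%:Z).
    by apply: vander; rewrite ltz_nat.
  have Hy : \sum_(j < b.+1) Y j k = Gz (n1 + n2) (b%:Z - k%:Z).
    by rewrite addnC; apply: vander; rewrite ltz_nat.
  rewrite -Hx -Hy [c k * _]mulr_sumr mulr_suml; apply: eq_bigr => i _.
  by rewrite mulr_sumr.
rewrite mulr_sumr; symmetry.
rewrite (eq_bigr (fun i : 'I_(minn a b).+1 => c i * Gz (n1 + n2) (a%:Z - i%:Z) * Gz (n1 + n2) (b%:Z - i%:Z))); last first.
  move=> i _; rewrite !qbinomE /c.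
  have -> : Gz (n1 + n2 + i) i = G (n1 + n2 + i) i by [].
  ring.
apply: (@sum_extend _ a.+1 (fun k => c k * Gz (n1 + n2) (a%:Z - k%:Z) * Gz (n1 + n2) (b%:Z - k%:Z))).
  by rewrite ltnS geq_minl.
move=> k Hk1 Hk2; rewrite (@Gz_neg _ (b%:Z - k%:Z)) ?mulr0 //; lia.
Qed.
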